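(* Let $(X,d)$ be a compact metric space and $f:X\to X$ continuous. If $(x,y)\in X^2$ is a proximal pair for $f$, i.e. $\liminf_{n\to\infty}d(f^n(x),f^n(y))=0$, then every $(z,w)\in\omega((x,y),f\times f)$ lies in $CR(f)^2$ and satisfies $z\sim w$.
   Context: $\omega((x,y),f\times f)$ is the $\omega$-limit set of $(x,y)$ under $f\times f$, i.e. the set of limits of $(f^{n_j}(x),f^{n_j}(y))$ along sequences $n_j\to\infty$. A $\delta$-chain of $f$ is a finite sequence $(x_i)_{i=0}^k$, $k\ge1$, with $d(f(x_i),x_{i+1})\le\delta$; a $\delta$-cycle is a $\delta$-chain with $x_0=x_k$. $CR(f)$ is the set of points $x$ such that for every $\delta>0$ there is a $\delta$-cycle starting and ending at $x$. For $x,y\in CR(f)$, $x\sim y$ iff for every $\delta>0$ there are integers $m>0$, $N>0$ such that for every $n\ge N$ there are $\delta$-chains $(x_i)_{i=0}^{mn},(y_i)_{i=0}^{mn}$ in $CR(f)$ with $x_0=y_{mn}=x$, $x_{mn}=y_0=y$. *)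

(* Defs.v *)
From Stdlib Require Import Reals Lra Lia.
Open Scope R_scope.

Record MetricSpace := {
  carrier :> Type;
  dist : carrier -> carrier -> R;
  dist_nonneg : forall x y, 0 <= dist x y;
  dist_eq0 : forall x y, dist x y = 0 <-> x = y;
  dist_sym : forall x y, dist x y = dist y x;
  dist_tri : forall x y z, dist x z <= dist x y + dist y z
}.

Section Defs.
Variable X : MetricSpace.

Definition seq_converges (u : nat -> X) (l : X) : Prop :=
  forall eps, 0 < eps -> exists N, forall n, (n >= N)%nat -> dist X (u n) l < eps.

(* Compactness of a metric space (sequential compactness, equivalent for metric spaces). *)
Definition compact_space : Prop :=
  forall u : nat -> X, exists (phi : nat -> nat) (l : X),
    (forall i j, (i < j)%nat -> (phi i < phi j)%nat) /\ seq_converges (fun j => u (phi j)) l.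

Definition continuous_map (f : X -> X) : Prop :=
  forall x eps, 0 < eps -> exists delta, 0 < delta /\
    forall y, dist X x y < delta -> dist X (f x) (f y) < eps.

Fixpoint iter (f : X -> X) (n : nat) (x : X) : X :=
  match n with O => x | S k => f (iter f k x) end.

(* liminf_{n -> oo} d(f^n x, f^n y) = 0 (distances are nonnegative). *)
Definition proximal (f : X -> X) (x y : X) : Prop :=
  forall eps N, 0 < eps -> exists n, (n >= N)%nat /\ dist X (iter f n x) (iter f n y) < eps.

Definition omega_limit_pair (f : X -> X) (x y z w : X) : Prop :=
  exists nseq : nat -> nat,
    (forall i j, (i < j)%nat -> (nseq i < nseq j)%nat) /\
    seq_converges (fun j => iter f (nseq j) x) z /\
    seq_converges (fun j => iter f (nseq j) y) w.

Definition delta_chain (f : X -> X) (delta : R) (c : nat -> X) (k : nat) : Prop :=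
  (1 <= k)%nat /\ forall i, (i < k)%nat -> dist X (f (c i)) (c (S i)) <= delta.

Definition chain_recurrent (f : X -> X) (x : X) : Prop :=
  forall delta, 0 < delta -> exists (c : nat -> X) (k : nat),
    delta_chain f delta c k /\ c O = x /\ c k = x.

Definition CR_rel (f : X -> X) (x y : X) : Prop :=
  chain_recurrent f x /\ chain_recurrent f y /\
  forall delta, 0 < delta -> exists m N : nat, (m > 0)%nat /\ (N > 0)%nat /\
    forall n, (n >= N)%nat -> exists cx cy : nat -> X,
      delta_chain f delta cx (m * n) /\ delta_chain f delta cy (m * n) /\
      (forall i, (i <= m * n)%nat -> chain_recurrent f (cx i) /\ chain_recurrent f (cy i)) /\
      cx O = x /\ cy (m * n)%nat = x /\ cx (m * n)%nat = y /\ cy O = y.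

End Defs.

(* Main.v *)
Require Import Defs.
From Stdlib Require Import Reals Lra Lia Classical IndefiniteDescription Arith.
Open Scope R_scope.

Section S.
Variable X : MetricSpace.
Variable f : X -> X.
Notation d := (Defs.dist X).

Lemma choice_nat {A : Type} (P : nat -> A -> Prop) :
  (forall n, exists a, P n a) -> exists g : nat -> A, forall n, P n (g n).
Proof.
  intros H. exists (fun n => proj1_sig (constructive_indefinite_description _ (H n))).
  intros n. exact (proj2_sig (constructive_indefinite_description _ (H n))).
Qed.

Lemma d0 p : d p p = 0.
Proof. exact (proj2 (Defs.dist_eq0 X p p) eq_refl). Qed.

Lemma strict_ge (ns : nat -> nat) : (forall i j, (i < j)%nat -> (ns i < ns j)%nat) -> forall j, (j <= ns j)%nat.
Proof. intros H j; induction j; [lia|]. specialize (H j (S j) ltac:(lia)); lia. Qed.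

Lemma iterS n a : iter X f (S n) a = f (iter X f n a).
Proof. reflexivity. Qed.

Lemma omega_CR (hf : continuous_map X f) (a l : X) (ns : nat -> nat) :
  (forall i j, (i < j)%nat -> (ns i < ns j)%nat) ->
  seq_converges X (fun j => iter X f (ns j) a) l -> chain_recurrent X f l.
Proof.
  intros Hns Hc delta Hd.
  destruct (hf l (delta/2) ltac:(lra)) as [eta [Heta Hcont]].
  destruct (Hc (Rmin eta (delta/2)) ltac:(apply Rmin_glb_lt; lra)) as [J HJ].
  set (s := ns J). set (t := ns (S J)). set (k := (t - s)%nat).
  assert (Hst : (s < t)%nat) by (apply Hns; lia).
  assert (H1 : d (iter X f s a) l < Rmin eta (delta/2)) by (apply HJ; lia).
  assert (H2 : d (iter X f t a) l < Rmin eta (delta/2)) by (apply HJ; lia).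
  pose proof (Rmin_l eta (delta/2)). pose proof (Rmin_r eta (delta/2)).
  exists (fun i => if Nat.eqb i 0 then l else if Nat.eqb i k then l else iter X f (s + i) a), k.
  split; [split|].
  - lia.
  - intros i Hi.
    pose proof (Defs.dist_tri X (f (if Nat.eqb i 0 then l else if Nat.eqb i k then l else iter X f (s + i) a))
       (iter X f (s + S i) a)
       (if Nat.eqb (S i) 0 then l else if Nat.eqb (S i) k then l else iter X f (s + S i) a)) as T.
    assert (A1 : d (f (if Nat.eqb i 0 then l else if Nat.eqb i k then l else iter X f (s + i) a))
       (iter X f (s + S i) a) <= delta/2).
    { destruct (Nat.eqb_spec i 0).
      - subst i. rewrite Nat.add_1_r, iterS. left. apply Hcont. rewrite Defs.dist_sym. lra.
      - destruct (Nat.eqb_spec i k); [lia|]. rewrite Nat.add_succ_r, iterS, d0. lra. }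
    assert (A2 : d (iter X f (s + S i) a)
       (if Nat.eqb (S i) 0 then l else if Nat.eqb (S i) k then l else iter X f (s + S i) a) <= delta/2).
    { simpl Nat.eqb at 1. destruct (Nat.eqb_spec (S i) k).
      - replace (s + S i)%nat with t by lia. lra.
      - rewrite d0. lra. }
    lra.
  - simpl. destruct (Nat.eqb_spec k 0); [lia|]. rewrite Nat.eqb_refl. auto.
Qed.

Lemma step_strict (g : nat -> nat) : (forall k, (g k < g (S k))%nat) ->
  forall i j, (i < j)%nat -> (g i < g j)%nat.
Proof.
  intros H i j Hij. induction j; [lia|].
  destruct (Nat.eq_dec i j); [subst; apply H|]. specialize (IHj ltac:(lia)). specialize (H j). lia.
Qed.

Lemma apx (hX : compact_space X) (hf : continuous_map X f) (a : X) eps :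
  0 < eps -> exists T, forall tau, (tau >= T)%nat -> exists q, chain_recurrent X f q /\
    d q (iter X f tau a) < eps /\ d (f q) (iter X f (S tau) a) < eps.
Proof.
  intros He. apply NNPP; intro Hn.
  set (Bad := fun tau => forall q, chain_recurrent X f q ->
     ~ (d q (iter X f tau a) < eps /\ d (f q) (iter X f (S tau) a) < eps)).
  assert (HB : forall T, exists tau, (tau >= T)%nat /\ Bad tau).
  { intro T. apply NNPP; intro H. apply Hn. exists T. intros tau Htau.
    apply NNPP; intro H2. apply H. exists tau. split; auto.
    intros q Hq Hq2. apply H2. exists q. tauto. }
  destruct (choice_nat _ HB) as [h Hh].
  set (ns := fix ns k := match k with O => h O | S k => h (S (ns k)) end).
  assert (Hns : forall i j, (i < j)%nat -> (ns i < ns j)%nat).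
  { apply step_strict. intro k. simpl. destruct (Hh (S (ns k))). lia. }
  destruct (hX (fun k => iter X f (ns k) a)) as [phi [l [Hphi Hconv]]].
  assert (Hcr : chain_recurrent X f l).
  { apply (omega_CR hf a l (fun j => ns (phi j))); auto. }
  destruct (hf l eps He) as [eta [Heta Hcont]].
  destruct (Hconv (Rmin eps eta) ltac:(apply Rmin_glb_lt; lra)) as [N HN].
  specialize (HN N (le_n N)). simpl in HN.
  pose proof (Rmin_l eps eta). pose proof (Rmin_r eps eta).
  assert (Hbad : Bad (ns (phi N))).
  { destruct (phi N); simpl; [apply (proj2 (Hh O)) | apply (proj2 (Hh _))]. }
  apply (Hbad l Hcr). split.
  - rewrite Defs.dist_sym. lra.
  - rewrite iterS. apply Hcont. rewrite Defs.dist_sym. lra.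
Qed.

Lemma tri3 p1 p2 p3 p4 : d p1 p4 <= d p1 p2 + d p2 p3 + d p3 p4.
Proof. pose proof (Defs.dist_tri X p1 p2 p4); pose proof (Defs.dist_tri X p2 p3 p4); lra. Qed.

Lemma basic (a b u v : X) (Pa Pb : nat -> X) (s q t : nat) eps delta :
 (s < q)%nat -> (q <= t)%nat -> 3*eps <= delta ->
 chain_recurrent X f u -> chain_recurrent X f v ->
 d (f u) (iter X f (S s) a) <= eps -> d (iter X f t b) v <= eps ->
 d (iter X f q a) (iter X f q b) <= eps ->
 (forall tau, (s <= tau)%nat -> chain_recurrent X f (Pa tau) /\ d (Pa tau) (iter X f tau a) <= eps
    /\ d (f (Pa tau)) (iter X f (S tau) a) <= eps) ->
 (forall tau, (s <= tau)%nat -> chain_recurrent X f (Pb tau) /\ d (Pb tau) (iter X f tau b) <= eps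
    /\ d (f (Pb tau)) (iter X f (S tau) b) <= eps) ->
 exists c, delta_chain X f delta c (t - s) /\ (forall i, (i <= t-s)%nat -> chain_recurrent X f (c i))
   /\ c O = u /\ c (t-s)%nat = v.
Proof.
  intros Hsq Hqt Hde Hu Hv H1 H2 H3 HPa HPb.
  set (L := (t - s)%nat).
  set (G := fun tau => if Nat.ltb tau q then iter X f tau a else iter X f tau b).
  set (P := fun tau => if Nat.ltb tau q then Pa tau else Pb tau).
  assert (HP : forall tau, (s <= tau)%nat -> chain_recurrent X f (P tau) /\
     d (P tau) (G tau) <= eps /\ d (f (P tau)) (f (G tau)) <= eps).
  { intros tau Ht. unfold P, G. destruct (Nat.ltb tau q); [exact (HPa tau Ht)|exact (HPb tau Ht)]. }
  assert (HG : forall tau, d (f (G tau)) (G (S tau)) <= eps).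
  { intros tau. unfold G.
    destruct (Nat.ltb_spec (S tau) q); destruct (Nat.ltb_spec tau q); try lia.
    - rewrite iterS, d0. pose proof (Defs.dist_nonneg X (f u) (iter X f (S s) a)); lra.
    - rewrite <- iterS. replace (S tau) with q by lia. auto.
    - rewrite iterS, d0. pose proof (Defs.dist_nonneg X (f u) (iter X f (S s) a)); lra. }
  assert (Heps : 0 <= eps) by (pose proof (Defs.dist_nonneg X (f u) (iter X f (S s) a)); lra).
  exists (fun i => if Nat.eqb i 0 then u else if Nat.eqb i L then v else P (s+i)%nat).
  split; [split|split; [|split]].
  - unfold L; lia.
  - intros i Hi.
    eapply Rle_trans; [apply (tri3 _ (f (G (s+i)%nat)) (G (s + S i)%nat))|].
    assert (T1 : d (f (if Nat.eqb i 0 then u else if Nat.eqb i L then v else P (s+i)%nat))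
                   (f (G (s+i)%nat)) <= eps).
    { destruct (Nat.eqb_spec i 0).
      - subst i. rewrite Nat.add_0_r. unfold G. destruct (Nat.ltb_spec s q); [|lia].
        rewrite <- iterS. auto.
      - destruct (Nat.eqb_spec i L); [lia|]. apply HP. lia. }
    assert (T2 : d (f (G (s+i)%nat)) (G (s + S i)%nat) <= eps).
    { rewrite Nat.add_succ_r. apply HG. }
    assert (T3 : d (G (s + S i)%nat) (if Nat.eqb (S i) 0 then u else if Nat.eqb (S i) L then v else P (s+ S i)%nat) <= eps).
    { simpl Nat.eqb at 1. destruct (Nat.eqb_spec (S i) L).
      - replace (s + S i)%nat with t by (unfold L in *; lia). unfold G.
        destruct (Nat.ltb_spec t q); [lia|]. auto.
      - rewrite Defs.dist_sym. apply HP. lia. }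
    lra.
  - intros i Hi. destruct (Nat.eqb i 0); auto. destruct (Nat.eqb i L); auto. apply HP. lia.
  - reflexivity.
  - simpl. destruct (Nat.eqb_spec L 0); [unfold L in *; lia|]. rewrite Nat.eqb_refl. auto.
Qed.

Lemma concat (c1 c2 : nat -> X) k1 k2 delta :
  delta_chain X f delta c1 k1 -> delta_chain X f delta c2 k2 -> c1 k1 = c2 O ->
  (forall i, (i <= k1)%nat -> chain_recurrent X f (c1 i)) ->
  (forall i, (i <= k2)%nat -> chain_recurrent X f (c2 i)) ->
  exists c, delta_chain X f delta c (k1 + k2) /\ (forall i, (i <= k1 + k2)%nat -> chain_recurrent X f (c i))
    /\ c O = c1 O /\ c (k1 + k2)%nat = c2 k2.
Proof.
  intros [Hk1 H1] [Hk2 H2] He C1 C2.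
  exists (fun i => if Nat.leb i k1 then c1 i else c2 (i - k1)%nat).
  split; [split|split; [|split]].
  - lia.
  - intros i Hi. destruct (Nat.leb_spec i k1); destruct (Nat.leb_spec (S i) k1).
    + apply H1. lia.
    + replace i with k1 by lia. rewrite He. replace (S k1 - k1)%nat with 1%nat by lia. apply H2. lia.
    + lia.
    + replace (S i - k1)%nat with (S (i - k1)) by lia. apply H2. lia.
  - intros i Hi. destruct (Nat.leb_spec i k1); [apply C1; lia|apply C2; lia].
  - reflexivity.
  - destruct (Nat.leb_spec (k1 + k2) k1); [lia|]. f_equal. lia.
Qed.

Lemma repeat_chain (cl c : nat -> X) L delta p r :
  delta_chain X f delta cl L -> (forall i, (i <= L)%nat -> chain_recurrent X f (cl i)) ->
  cl O = p -> cl L = p ->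
  delta_chain X f delta c L -> (forall i, (i <= L)%nat -> chain_recurrent X f (c i)) ->
  c O = p -> c L = r ->
  forall n, exists c', delta_chain X f delta c' (L * S n) /\
    (forall i, (i <= L * S n)%nat -> chain_recurrent X f (c' i)) /\ c' O = p /\ c' (L * S n)%nat = r.
Proof.
  intros Hl Cl Hl0 HlL Hc Cc Hc0 HcL n. induction n.
  - exists c. rewrite Nat.mul_1_r. auto.
  - destruct IHn as [c' [H1 [H2 [H3 H4]]]].
    destruct (concat cl c' L (L * S n) delta Hl H1 ltac:(congruence) Cl H2) as [c'' [G1 [G2 [G3 G4]]]].
    exists c''. replace (L * S (S n))%nat with (L + L * S n)%nat by nia. split; [|split; [|split]]; congruence || auto.
Qed.
End S.

Lemma Papx (X : MetricSpace) (f : X -> X) (hX : compact_space X) (hf : continuous_map X f) (a : X) eps :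
  0 < eps -> exists T (P : nat -> X), forall tau, (T <= tau)%nat ->
    chain_recurrent X f (P tau) /\ Defs.dist X (P tau) (iter X f tau a) <= eps /\
    Defs.dist X (f (P tau)) (iter X f (S tau) a) <= eps.
Proof.
  intros He. destruct (apx X f hX hf a eps He) as [T HT]. exists T.
  assert (H : forall tau, exists q, (T <= tau)%nat -> chain_recurrent X f q /\
    Defs.dist X q (iter X f tau a) <= eps /\ Defs.dist X (f q) (iter X f (S tau) a) <= eps).
  { intros tau. destruct (le_lt_dec T tau) as [h|h].
    - destruct (HT tau h) as [q [A [B C]]]. exists q. intros _. split; [auto|split; lra].
    - exists a. intros; lia. }
  destruct (choice_nat _ H) as [P HP]. exists P. auto.
Qed.

Theorem lemmaA1 (X : MetricSpace) (f : X -> X)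
  (hX : compact_space X) (hf : continuous_map X f) (x y : X)
  (hprox : proximal X f x y) :
  forall z w : X, omega_limit_pair X f x y z w ->
    chain_recurrent X f z /\ chain_recurrent X f w /\ CR_rel X f z w.
Proof.
  intros z w [ns [Hns [Hz Hw]]].
  assert (CRz : chain_recurrent X f z) by exact (omega_CR X f hf x z ns Hns Hz).
  assert (CRw : chain_recurrent X f w) by exact (omega_CR X f hf y w ns Hns Hw).
  split; [auto|split; [auto|]]. split; [auto|split; [auto|]].
  intros delta Hd. set (eps := delta / 3).
  assert (He : 0 < eps) by (unfold eps; lra).
  destruct (Papx X f hX hf x eps He) as [Tx [Px HPx]].
  destruct (Papx X f hX hf y eps He) as [Ty [Py HPy]].
  destruct (hf z eps He) as [ez [Hez Hcz]].
  destruct (hf w eps He) as [ew [Hew Hcw]].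
  destruct (Hz (Rmin eps ez) ltac:(apply Rmin_glb_lt; lra)) as [Jz HJz].
  destruct (Hw (Rmin eps ew) ltac:(apply Rmin_glb_lt; lra)) as [Jw HJw].
  pose proof (Rmin_l eps ez). pose proof (Rmin_r eps ez).
  pose proof (Rmin_l eps ew). pose proof (Rmin_r eps ew).
  pose proof (strict_ge ns Hns) as Hge.
  set (j0 := Nat.max (Nat.max Jz Jw) (Nat.max Tx Ty)).
  set (s := ns j0).
  assert (Hs : (j0 <= s)%nat) by apply Hge.
  destruct (hprox eps (S s) He) as [q [Hq Hqd]].
  set (j1 := Nat.max (Nat.max Jz Jw) q).
  set (t := ns j1).
  assert (Ht : (j1 <= t)%nat) by apply Hge.
  assert (Zs : Defs.dist X (iter X f s x) z < Rmin eps ez) by (apply HJz; lia).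
  assert (Zt : Defs.dist X (iter X f t x) z < Rmin eps ez) by (apply HJz; lia).
  assert (Ws : Defs.dist X (iter X f s y) w < Rmin eps ew) by (apply HJw; lia).
  assert (Wt : Defs.dist X (iter X f t y) w < Rmin eps ew) by (apply HJw; lia).
  assert (Fz : Defs.dist X (f z) (iter X f (S s) x) <= eps).
  { rewrite iterS. left. apply Hcz. rewrite Defs.dist_sym. lra. }
  assert (Fw : Defs.dist X (f w) (iter X f (S s) y) <= eps).
  { rewrite iterS. left. apply Hcw. rewrite Defs.dist_sym. lra. }
  assert (Hsq : (s < q)%nat) by lia.
  assert (Hqt : (q <= t)%nat) by lia.
  assert (H3 : 3 * eps <= delta) by (unfold eps; lra).
  assert (HPx' : forall tau, (s <= tau)%nat -> chain_recurrent X f (Px tau) /\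
     Defs.dist X (Px tau) (iter X f tau x) <= eps /\ Defs.dist X (f (Px tau)) (iter X f (S tau) x) <= eps).
  { intros; apply HPx; lia. }
  assert (HPy' : forall tau, (s <= tau)%nat -> chain_recurrent X f (Py tau) /\
     Defs.dist X (Py tau) (iter X f tau y) <= eps /\ Defs.dist X (f (Py tau)) (iter X f (S tau) y) <= eps).
  { intros; apply HPy; lia. }
  assert (D0 : forall p, Defs.dist X p p <= eps) by (intros; rewrite d0 with (X:=X); lra).
  destruct (basic X f x x z z Px Px s q t eps delta Hsq Hqt H3 CRz CRz Fz ltac:(lra) (D0 _) HPx' HPx')
    as [lz [Lz1 [Lz2 [Lz3 Lz4]]]].
  destruct (basic X f y y w w Py Py s q t eps delta Hsq Hqt H3 CRw CRw Fw ltac:(lra) (D0 _) HPy' HPy')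
    as [lw [Lw1 [Lw2 [Lw3 Lw4]]]].
  destruct (basic X f x y z w Px Py s q t eps delta Hsq Hqt H3 CRz CRw Fz ltac:(lra) ltac:(lra) HPx' HPy')
    as [zw [Z1 [Z2 [Z3 Z4]]]].
  assert (Hqd' : Defs.dist X (iter X f q y) (iter X f q x) <= eps) by (rewrite Defs.dist_sym; lra).
  destruct (basic X f y x w z Py Px s q t eps delta Hsq Hqt H3 CRw CRz Fw ltac:(lra) Hqd' HPy' HPx')
    as [wz [W1 [W2 [W3 W4]]]].
  exists (t - s)%nat, 1%nat. split; [lia|split; [lia|]].
  intros n Hn. destruct n as [|n]; [lia|].
  destruct (repeat_chain X f lz zw (t - s) delta z w Lz1 Lz2 Lz3 Lz4 Z1 Z2 Z3 Z4 n)
    as [cx [X1 [X2 [X3 X4]]]].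
  destruct (repeat_chain X f lw wz (t - s) delta w z Lw1 Lw2 Lw3 Lw4 W1 W2 W3 W4 n)
    as [cy [Y1 [Y2 [Y3 Y4]]]].
  exists cx, cy. split; [exact X1|split; [exact Y1|]].
  split; [intros i Hi; split; [apply X2|apply Y2]; exact Hi|].
  repeat split; auto.
Qed.
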